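(* Let $\mathbb{K}$ be a countable set, $m\ge2$ an even integer, $\mathcal{X}$ a nonempty set, and $(\phi_k)_{k\in\mathbb{K}}$ functions $\phi_k\colon\mathcal{X}\to\mathbb{R}$ with $(\phi_k(x))_{k\in\mathbb{K}}\in\ell^m(\mathbb{K})$ for every $x\in\mathcal{X}$. Let $K(x'_1,\dots,x'_m)=\sum_{k\in\mathbb{K}}\phi_k(x'_1)\cdots\phi_k(x'_m)$ and suppose that $K(x,\dots,x)>0$ for every $x\in\mathcal{X}$. Define $$\tilde K\colon\mathcal{X}^m\to\mathbb{R},\qquad \tilde K(x'_1,\dots,x'_m)=\frac{K(x'_1,\dots,x'_m)}{K(x'_1,\dots,x'_1)^{1/m}\cdots K(x'_m,\dots,x'_m)^{1/m}}.$$ Then there exists a family $(\tilde\phi_k)_{k\in\mathbb{K}}$ of functions $\tilde\phi_k\colon\mathcal{X}\to\mathbb{R}$ with $(\tilde\phi_k(x))_{k\in\mathbb{K}}\in\ell^m(\mathbb{K})$ for every $x$, such that $\tilde K(x'_1,\dots,x'_m)=\sum_{k\in\mathbb{K}}\tilde\phi_k(x'_1)\cdots\tilde\phi_k(x'_m)$ for all $(x'_1,\dots,x'_m)\in\mathcal{X}^m$; moreover (i) $\tilde K(x,\dots,x)=1$ for every $x\in\mathcal{X}$, and (ii) $|\tilde K(x'_1,\dots,x'_m)|\le1$ for every $(x'_1,\dots,x'_m)\in\mathcal{X}^m$.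
   Context: $\ell^m(\mathbb{K})$ is the space of real families with $\sum_k|w_k|^m<\infty$. *)

(* Defs.v *)
From HB Require Import structures.
From mathcomp Require Import all_boot all_order all_algebra.
From mathcomp Require Import all_classical all_reals all_analysis.
Set Implicit Arguments. Unset Strict Implicit. Unset Printing Implicit Defensive.
Import Order.TTheory GRing.Theory Num.Theory.
Local Open Scope classical_set_scope.
Local Open Scope ring_scope.

Definition ellm (R : realType) (T : choiceType) (m : nat) (w : T -> R) : Prop :=
  (\esum_(k in [set: T]) ((`|w k| ^+ m)%:E) < +oo)%E.

(* unconditional sum of a real family over T (positive part minus negative
   part); this is the usual value of sum_k w_k for absolutely summable w *)
Definition csum (R : realType) (T : choiceType) (w : T -> R) : R :=
  fine (\esum_(k in [set: T]) ((Num.max (w k) 0)%:E)) -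
  fine (\esum_(k in [set: T]) ((Num.max (- w k) 0)%:E)).

Definition kern (R : realType) (T : choiceType) (X : Type) (m : nat)
  (phi : T -> X -> R) (xs : 'I_m -> X) : R :=
  csum (fun k => \prod_(i < m) phi k (xs i)).

Definition kern_tilde (R : realType) (T : choiceType) (X : Type) (m : nat)
  (phi : T -> X -> R) (xs : 'I_m -> X) : R :=
  kern phi xs /
  \prod_(i < m) (kern phi (fun _ : 'I_m => xs i) `^ (m%:R^-1)).

(* Main.v *)
Require Import Defs.
From HB Require Import structures.
From mathcomp Require Import all_boot all_order all_algebra.
From mathcomp Require Import all_classical all_reals all_analysis.
From mathcomp Require Import lra.
Import Order.TTheory GRing.Theory Num.Theory.
Local Open Scope classical_set_scope.
Local Open Scope ring_scope.

Lemma esumZ (R : realType) (T : choiceType) (c : R) (a : T -> \bar R) :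
  0 <= c -> (forall i, 0 <= a i)%E ->
  (\esum_(i in [set: T]) (c%:E * a i) = c%:E * \esum_(i in [set: T]) a i)%E.
Proof.
move=> c0 a0; rewrite /esum -ereal_supZl //; last first.
  by apply/set0P; exists 0%E; exists set0; [exact: fsets_set0 | rewrite fsbig_set0].
congr ereal_sup; apply/seteqP; split => x /=.
- move=> [A [fA sA] <-]; exists (\sum_(i \in A) a i)%E; first by exists A.
  by rewrite !fsbig_finite // ge0_sume_distrr.
- move=> [y [A [fA sA] <-] <-]; exists A => //.
  by rewrite !fsbig_finite // ge0_sume_distrr.
Qed.

Lemma fineZ (R : realType) (c : R) (e : \bar R) : 0 < c ->
  fine (c%:E * e)%E = c * fine e.
Proof.
move=> c0; case: e => [r| |] /=; first by [].
- by rewrite muleC gt0_mulye ?lte_fin // mulr0.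
- by rewrite muleC gt0_mulNye ?lte_fin // mulr0.
Qed.

Lemma csumZ (R : realType) (T : choiceType) (c : R) (w : T -> R) : 0 < c ->
  csum (fun k => c * w k) = c * csum w.
Proof.
move=> c0; rewrite /csum.
have E1 k : Num.max (c * w k) 0 = c * Num.max (w k) 0.
  by rewrite maxr_pMr ?ltW // mulr0.
have E2 k : Num.max (- (c * w k)) 0 = c * Num.max (- w k) 0.
  by rewrite maxr_pMr ?ltW // mulr0 mulrN.
rewrite (eq_esum (fun k _ => congr1 EFin (E1 k))).
rewrite (eq_esum (fun k _ => congr1 EFin (E2 k))).
rewrite (eq_esum (fun k _ => EFinM _ _)).
rewrite [X in _ - fine X](eq_esum (fun k _ => EFinM _ _)).
rewrite !esumZ ?ltW // => [|i|i]; last 2 first.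
- by rewrite lee_fin le_max lexx orbT.
- by rewrite lee_fin le_max lexx orbT.
by rewrite !fineZ // mulrBr.
Qed.

Lemma csum_ge0E (R : realType) (T : choiceType) (w : T -> R) :
  (forall k, 0 <= w k) ->
  csum w = fine (\esum_(k in [set: T]) (w k)%:E)%E.
Proof.
move=> w0; rewrite /csum.
rewrite (eq_esum (fun k _ => congr1 EFin (max_l (w0 k)))).
rewrite [X in _ - fine X]esum1 ?subr0 // => k _.
by rewrite max_r // oppr_le0.
Qed.

Lemma amgm (R : realType) (m : nat) (a : 'I_m -> R) : (0 < m)%N ->
  `|\prod_(i < m) a i| <= (\sum_(i < m) `|a i| ^+ m) / m%:R.
Proof.
move=> m0.
have H := (@leif_AGM R 'I_m predT (fun i => `|a i| ^+ m)
  (fun i _ => exprn_ge0 _ (normr_ge0 _))).1.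
move: H; rewrite /= cardE size_enum_ord prodrXl -normr_prod.
rewrite ler_pXn2r // ?nnegrE //.
by rewrite divr_ge0 // sumr_ge0 // => i _; rewrite exprn_ge0.
Qed.

Lemma fine01 (R : realType) (e : \bar R) : (0 <= e)%E -> (e <= 1)%E ->
  0 <= fine e <= 1.
Proof.
case: e => [r| |] //=.
by rewrite !lee_fin => -> ->.
Qed.

Theorem proposition4p5 (R : realType) (T : countType) (m : nat)
  (X : Type) (phi : T -> X -> R) :
  (2 <= m)%N -> ~~ odd m -> inhabited X ->
  (forall x : X, ellm m (fun k => phi k x)) ->
  (forall x : X, 0 < kern phi (fun _ : 'I_m => x)) ->
  exists phit : T -> X -> R,
    (forall x : X, ellm m (fun k => phit k x)) /\
    (forall xs : 'I_m -> X, kern_tilde phi xs = kern phit xs) /\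
    (forall x : X, kern_tilde phi (fun _ : 'I_m => x) = 1) /\
    (forall xs : 'I_m -> X, `|kern_tilde phi xs| <= 1).
Proof.
move=> m2 ev _ ell pos.
pose d x := kern phi (fun _ : 'I_m => x).
have m0 : (0 < m)%N by apply: leq_trans m2.
have mR : (0 < m%:R :> R) by rewrite ltr0n.
have prodc k x : \prod_(i < m) phi k x = `|phi k x| ^+ m.
  by rewrite prodr_const card_ord -normrX ger0_norm // exprn_even_ge0.
have dE x : (d x)%:E = (\esum_(k in [set: T]) (`|phi k x| ^+ m)%:E)%E.
  rewrite /d /kern.
  have -> : (fun k => \prod_(i < m) phi k x) = fun k => `|phi k x| ^+ m.
    by apply: funext => k; exact: prodc.
  rewrite csum_ge0E => [|k]; last exact: exprn_ge0.
  rewrite fineK // ge0_fin_numE; first exact: ell x.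
  by apply: esum_ge0 => k _; rewrite lee_fin exprn_ge0.
pose s x := d x `^ (m%:R^-1).
have s0 x : 0 < s x by apply: powR_gt0; exact: pos.
have sm x : s x ^+ m = d x.
  rewrite /s -powR_mulrn ?powR_ge0 // -powRrM mulVf ?powRr1 ?ltW ?pos //.
  by rewrite gt_eqF.
exists (fun k x => phi k x / s x).
have nrm x : (\esum_(k in [set: T]) (`|phi k x / s x| ^+ m)%:E = 1)%E.
  rewrite (@eq_esum _ _ _ _ (fun k => ((d x)^-1)%:E * (`|phi k x| ^+ m)%:E)%E); last first.
    move=> k _; rewrite -EFinM normrM normfV (gtr0_norm (s0 x)) exprMn exprVn sm.
    by rewrite mulrC.
  rewrite esumZ; last 2 first.
    by rewrite invr_ge0 (ltW (pos x)).
    by move=> k; rewrite lee_fin exprn_ge0.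
  by rewrite -dE -EFinM mulVf // gt_eqF ?pos.
have Ek (xs : 'I_m -> X) : kern_tilde phi xs = kern (fun k x => phi k x / s x) xs.
  rewrite /kern_tilde [RHS]/kern.
  have -> : (fun k => \prod_(i < m) (phi k (xs i) / s (xs i))) =
      fun k => (\prod_(i < m) s (xs i))^-1 * \prod_(i < m) phi k (xs i).
    by apply: funext => k; rewrite prodf_div mulrC.
  by rewrite csumZ ?invr_gt0 ?prodr_gt0 // mulrC.
split; first by move=> x; rewrite /ellm nrm ltry.
split; first exact: Ek.
split.
  move=> x; change (d x / \prod_(i < m) s x = 1).
  by rewrite prodr_const card_ord sm divff // gt_eqF // pos.
move=> xs; rewrite Ek /kern.
set w := fun k => \prod_(i < m) (phi k (xs i) / s (xs i)).
have wle k : `|w k| <= (\sum_(i < m) `|phi k (xs i) / s (xs i)| ^+ m) / m%:R.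
  exact: amgm.
have Eabs : (\esum_(k in [set: T]) (`|w k|)%:E <= 1)%E.
  apply: le_trans (le_esum (b := fun k => ((m%:R^-1)%:E *
     (\sum_(i < m) `|phi k (xs i) / s (xs i)| ^+ m)%:E)%E) _) _.
    by move=> k _; rewrite -EFinM lee_fin mulrC; exact: wle.
  rewrite esumZ ?invr_ge0 ?ler0n //; last first.
    by move=> k; rewrite lee_fin sumr_ge0 // => i _; rewrite exprn_ge0.
  rewrite (eq_esum (b := fun k => (\sum_(i < m) (`|phi k (xs i) / s (xs i)| ^+ m)%:E)%E));
    last by move=> k _; rewrite sumEFin.
  rewrite esum_sum; last by move=> k i _ _; rewrite lee_fin exprn_ge0.
  rewrite (eq_bigr (fun=> 1%E)); last by move=> i _; exact: nrm.
  rewrite sumEFin sumr_const card_ord -EFinM mulVf ?gt_eqF //.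
rewrite /csum.
have hP : 0 <= fine (\esum_(k in [set: T]) (Num.max (w k) 0)%:E)%E <= 1.
  apply: fine01; first by apply: esum_ge0 => k _; rewrite lee_fin le_max lexx orbT.
  apply: le_trans Eabs; apply: le_esum => k _.
  by rewrite lee_fin ge_max normr_ge0 ler_norm.
have hN : 0 <= fine (\esum_(k in [set: T]) (Num.max (- w k) 0)%:E)%E <= 1.
  apply: fine01; first by apply: esum_ge0 => k _; rewrite lee_fin le_max lexx orbT.
  apply: le_trans Eabs; apply: le_esum => k _.
  by rewrite lee_fin ge_max normr_ge0 -normrN ler_norm.
move: hP hN => /andP[hP1 hP2] /andP[hN1 hN2].
rewrite ler_norml; apply/andP; split; lra.
Qed.
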